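(* Let $\Gamma=\langle V,(w_u)_{u\in V},\alpha,\beta\rangle$ be a celebrity game with $\beta>1$, $n=|V|$, $W=\sum_{u\in V}w_u$ and $w_{\max}=\max_u w_u$. The following are equivalent: (1) $\Gamma$ is a star celebrity game; (2) either $\alpha<w_{\max}$, or $\alpha\ge w_{\max}$ and there is at most one $u\in V$ with $\alpha>W-w_u$; (3) a star graph $S_n$ on $V$ (a tree with one vertex adjacent to all others) is a Nash equilibrium graph of $\Gamma$.
   Context: A celebrity game $\Gamma=\langle V,(w_u)_{u\in V},\alpha,\beta\rangle$ consists of a set of players $V=\{1,\dots,n\}$, celebrity weights $w_u>0$, a link cost $\alpha>0$ and a critical distance $\beta$ with $1\le\beta\le n-1$. A strategy of player $u$ is a set $S_u\subseteq V\setminus\{u\}$; a strategy profile is $S=(S_1,\dots,S_n)$; its outcome graph $G[S]$ is the undirected graph on $V$ with edge set $\{\{u,v\}: u\in S_v\text{ or }v\in S_u\}$. With $d_G$ the graph distance (infinite between different connected components), the cost of player $u$ is $c_u(S)=\alpha|S_u|+\sum_{v:\,d_{G[S]}(u,v)>\beta}w_v$. $S$ is a Nash equilibrium if no player can strictly decrease its cost by changing only its own strategy; a graph $G$ is a Nash equilibrium graph of $\Gamma$ if $G=G[S]$ for some Nash equilibrium $S$. $\Gamma$ is a star celebrity game if it has a Nash equilibrium graph that is connected. *)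

(* Defs.v *)
From mathcomp Require Import all_boot all_order all_algebra.
Set Implicit Arguments. Unset Strict Implicit. Unset Printing Implicit Defensive.
Import Order.TTheory GRing.Theory Num.Theory.
Local Open Scope ring_scope.

(* A strategy profile: each player u buys links to the set S u. *)
Definition profile (n : nat) := 'I_n -> {set 'I_n}.

Definition valid_strategy (n : nat) (u : 'I_n) (Su : {set 'I_n}) : bool :=
  u \notin Su.
Definition valid_profile (n : nat) (S : profile n) : Prop :=
  forall u, valid_strategy u (S u).

Definition outcome (n : nat) (S : profile n) : rel 'I_n :=
  fun u v => (u \in S v) || (v \in S u).

(* d_G(u,v) <= k : there is a walk from u to v in G with at most k edges.
   Hence d_G(u,v) > k (including infinite distance) iff ~~ within G k u v. *)
Definition within (n : nat) (G : rel 'I_n) (k : nat) (u v : 'I_n) : bool :=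
  [exists m : 'I_k.+1, exists p : m.-tuple 'I_n,
     path G u p && (last u p == v)].

Definition deviate (n : nat) (S : profile n) (u : 'I_n) (Su : {set 'I_n})
  : profile n := fun v => if v == u then Su else S v.

Definition cost (R : realFieldType) (n : nat) (w : 'I_n -> R) (alpha : R)
  (beta : nat) (S : profile n) (u : 'I_n) : R :=
  alpha * (#|S u|)%:R +
  \sum_(v : 'I_n | ~~ within (outcome S) beta u v) w v.

Definition nash (R : realFieldType) (n : nat) (w : 'I_n -> R) (alpha : R)
  (beta : nat) (S : profile n) : Prop :=
  valid_profile S /\
  forall (u : 'I_n) (Su : {set 'I_n}), valid_strategy u Su ->
    cost w alpha beta S u <= cost w alpha beta (deviate S u Su) u.

Definition ne_graph (R : realFieldType) (n : nat) (w : 'I_n -> R) (alpha : R)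
  (beta : nat) (G : rel 'I_n) : Prop :=
  exists S : profile n, nash w alpha beta S /\ forall u v, outcome S u v = G u v.

Definition connected_graph (n : nat) (G : rel 'I_n) : Prop :=
  forall u v : 'I_n, connect G u v.

Definition star_celebrity_game (R : realFieldType) (n : nat) (w : 'I_n -> R)
  (alpha : R) (beta : nat) : Prop :=
  exists G : rel 'I_n, ne_graph w alpha beta G /\ connected_graph G.

Definition star_graph (n : nat) (G : rel 'I_n) : Prop :=
  exists c : 'I_n, forall u v, G u v = (u != v) && ((u == c) || (v == c)).

Definition totalW (R : realFieldType) (n : nat) (w : 'I_n -> R) : R :=
  \sum_(u : 'I_n) w u.

Definition wmax (R : realFieldType) (n : nat) (w : 'I_n -> R) : R :=
  \big[Num.max/0]_(u : 'I_n) w u.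

(* Main.v *)
Require Import Defs.
From mathcomp Require Import all_boot all_order all_algebra.
From mathcomp Require Import lra zify.
Import Order.TTheory GRing.Theory Num.Theory.
Local Open Scope ring_scope.
Set Implicit Arguments. Unset Strict Implicit.

Lemma within_refl n (G : rel 'I_n) k u : within G k u u.
Proof. by apply/existsP; exists ord0; apply/existsP; exists [tuple]; rewrite /= eqxx. Qed.

Lemma within_isol n (G : rel 'I_n) k u v :
  (forall z, G u z = false) -> u != v -> ~~ within G k u v.
Proof.
move=> hG huv; apply/existsP => [[m /existsP [[s sz] /andP [hp hl]]]].
move: hp hl => /=; case: s sz => [|y s] _ /=.
  by move=> _ /eqP e; rewrite e eqxx in huv.
by rewrite hG.
Qed.

Lemma star_within n (G : rel 'I_n) (c : 'I_n) k :
  (1 < k)%N -> (forall x y, G x y = (x != y) && ((x == c) || (y == c))) ->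
  forall u v, within G k u v.
Proof.
move=> hk hG u v.
case: (eqVneq u v) => [->|huv]; first exact: within_refl.
have h1 : (1 < k.+1)%N by lia.
have h2 : (2 < k.+1)%N by lia.
case: (eqVneq u c) => [euc|huc].
  apply/existsP; exists (Ordinal h1); apply/existsP; exists [tuple v].
  by rewrite /= hG huv euc eqxx /=.
case: (eqVneq v c) => [evc|hvc].
  apply/existsP; exists (Ordinal h1); apply/existsP; exists [tuple v].
  by rewrite /= hG huv evc eqxx orbT /=.
apply/existsP; exists (Ordinal h2); apply/existsP; exists [tuple c; v].
by rewrite /= !hG huc eqxx orbT (eq_sym c v) hvc /=.
Qed.


Lemma totalW_split (R : realFieldType) n (w : 'I_n -> R) u :
  totalW w - w u = \sum_(x | x != u) w x.
Proof. by rewrite /totalW (bigD1 u) //= addrC addrK. Qed.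

Lemma sum2_le (R : realFieldType) n (w : 'I_n -> R) a b :
  (forall u, 0 < w u) -> a != b -> w a + w b <= totalW w.
Proof.
move=> hw hab; rewrite /totalW (bigD1 a) //= (bigD1 b) /=; last by rewrite eq_sym hab.
have : 0 <= \sum_(i | (i != a) && (i != b)) w i by apply: sumr_ge0 => i _; exact: ltW.
lra.
Qed.

Lemma sum3_le (R : realFieldType) n (w : 'I_n -> R) a b c :
  (forall u, 0 < w u) -> a != b -> a != c -> b != c -> w a + w b + w c <= totalW w.
Proof.
move=> hw hab hac hbc; rewrite /totalW (bigD1 a) //= (bigD1 b) /=; last by rewrite eq_sym hab.
rewrite (bigD1 c) /=; last by rewrite eq_sym hac eq_sym hbc.
have : 0 <= \sum_(i | (i != a) && (i != b) && (i != c)) w i by apply: sumr_ge0 => i _; exact: ltW.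
lra.
Qed.

Lemma dist_le (R : realFieldType) n (w : 'I_n -> R) (G : rel 'I_n) k u :
  (forall u, 0 < w u) ->
  \sum_(x | ~~ within G k u x) w x <= totalW w - w u.
Proof.
move=> hw; rewrite totalW_split big_mkcond [X in _ <= X]big_mkcond /=.
apply: ler_sum => x _.
case: (eqVneq x u) => [->|hxu]; first by rewrite within_refl.
by case: (~~ within _ _ _ _) => //; exact: ltW.
Qed.

Lemma dist_ge0 (R : realFieldType) n (w : 'I_n -> R) (P : pred 'I_n) :
  (forall u, 0 < w u) -> 0 <= \sum_(x | P x) w x.
Proof. by move=> hw; apply: sumr_ge0 => x _; exact: ltW. Qed.

Lemma dist_isol (R : realFieldType) n (w : 'I_n -> R) (G : rel 'I_n) k u :
  (forall u, 0 < w u) -> (forall z, G u z = false) ->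
  totalW w - w u <= \sum_(x | ~~ within G k u x) w x.
Proof.
move=> hw hG; rewrite totalW_split big_mkcond [X in _ <= X]big_mkcond /=.
apply: ler_sum => x _.
case: (eqVneq x u) => [->|hxu]; first by rewrite within_refl.
have hux : u != x by rewrite eq_sym.
by rewrite (negbTE (@within_isol _ _ k _ _ hG hux)).
Qed.

Lemma cost_lb (R : realFieldType) n (w : 'I_n -> R) alpha beta (S : profile n) u :
  (forall u, 0 < w u) -> alpha * (#|S u|)%:R <= cost w alpha beta S u.
Proof. by move=> hw; rewrite /cost lerDl; exact: dist_ge0. Qed.

Definition star_prof n (c : 'I_n) : profile n :=
  fun v => if v == c then set0 else [set c].

Lemma star_prof_out n (c : 'I_n) x y :
  outcome (star_prof c) x y = (x != y) && ((x == c) || (y == c)).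
Proof.
rewrite /outcome /star_prof.
case: (eqVneq x c) => [->|hx]; case: (eqVneq y c) => [->|hy];
  rewrite ?in_set0 ?in_set1 ?eqxx //=; try (by rewrite eq_sym); try (by rewrite (negbTE hx));
  try by rewrite (negbTE hx) (negbTE hy).
by rewrite (negbTE hx) (negbTE hy) andbF.
Qed.

Lemma star_ne (R : realFieldType) n (w : 'I_n -> R) alpha beta (c : 'I_n) :
  (forall u, 0 < w u) -> 0 < alpha -> (1 < beta)%N ->
  (forall v, v != c -> alpha <= totalW w - w v) ->
  exists G, star_graph G /\ ne_graph w alpha beta G.
Proof.
move=> hw ha hb hc.
exists (outcome (star_prof c)); split; first by exists c => u v; exact: star_prof_out.
exists (star_prof c); split => //; split.
  by move=> u; rewrite /valid_strategy /star_prof; case: (eqVneq u c) => [_|h];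
    rewrite ?in_set0 ?in_set1.
move=> u T _.
have hwi := star_within hb (@star_prof_out n c).
have -> : cost w alpha beta (star_prof c) u = alpha * (#|star_prof c u|)%:R.
  rewrite /cost big_pred0 ?addr0 // => x; by rewrite hwi.
have hdev : cost w alpha beta (deviate (star_prof c) u T) u =
   alpha * (#|T|)%:R + \sum_(x | ~~ within (outcome (deviate (star_prof c) u T)) beta u x) w x.
  by rewrite /cost /deviate eqxx.
rewrite hdev /star_prof.
case: (eqVneq u c) => [_|huc].
  rewrite cards0 mulr0; apply: addr_ge0; last exact: dist_ge0.
  by apply: mulr_ge0; [exact: ltW | exact: ler0n].
rewrite cards1 mulr1.
case: (set_0Vmem T) => [eT|[t ht]].
  rewrite eT cards0 mulr0 add0r.
  apply: le_trans (hc _ huc) _; apply: dist_isol => // z.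
  rewrite /outcome /deviate eqxx in_set0 orbF.
  case: (eqVneq z u) => [_|_]; first by rewrite in_set0.
  by case: (eqVneq z c) => _; rewrite ?in_set0 ?in_set1 ?(negbTE huc).
have h1 : 1 <= (#|T|)%:R :> R by rewrite ler1n card_gt0; apply/set0Pn; exists t.
have : 0 <= \sum_(x | ~~ within (outcome (deviate (fun v => if v == c then set0 else [set c]) u T)) beta u x) w x
  by exact: dist_ge0.
have : alpha <= alpha * (#|T|)%:R by rewrite ler_pMr.
lra.
Qed.

Lemma star_conn n (G : rel 'I_n) : star_graph G -> connected_graph G.
Proof.
case=> c hG u v.
have hc : forall x, connect G x c.
  move=> x; case: (eqVneq x c) => [->|hx]; first exact: connect0.
  by apply: connect1; rewrite hG hx eqxx orbT.
have hc' : forall x, connect G c x.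
  move=> x; case: (eqVneq x c) => [->|hx]; first exact: connect0.
  by apply: connect1; rewrite hG eq_sym hx eqxx.
exact: connect_trans (hc u) (hc' v).
Qed.

Lemma path_buy n (S : profile n) :
  (forall v, (#|S v| <= 1)%N) ->
  forall p x prev, prev \in S x -> path (outcome S) x p -> uniq (prev :: x :: p) ->
  (0 < #|S (last x p)|)%N.
Proof.
move=> h1; elim=> [|y p IH] x prev hpx /=.
  by move=> _ _; apply/card_gt0P; exists prev.
case/andP => hxy hp hu.
move: hxy; rewrite /outcome => /orP [hxy|hyx].
  apply: IH hxy hp _; by case/andP: hu.
exfalso; have := h1 x; rewrite leqNgt => /negP; apply; apply/card_gt1P.
exists prev, y; split => //.
by apply/eqP => e; move: hu; rewrite e /= !inE eqxx orbT.
Qed.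

Lemma conn_cond (R : realFieldType) n (w : 'I_n -> R) alpha beta (G : rel 'I_n) u1 u2 :
  (forall u, 0 < w u) -> 0 < alpha ->
  ne_graph w alpha beta G -> connected_graph G ->
  u1 != u2 -> totalW w - w u1 < alpha -> totalW w - w u2 < alpha -> False.
Proof.
move=> hw ha [S [[hval hne] hSG]] hconn h12 hu1 hu2.
have K : forall v, alpha * (#|S v|)%:R <= totalW w - w v.
  move=> v; apply: le_trans (cost_lb _ _ _ _ hw) _.
  apply: le_trans (hne v set0 _) _; first by rewrite /valid_strategy in_set0.
  by rewrite /cost /deviate eqxx cards0 mulr0 add0r; exact: dist_le.
have K0 : forall v, totalW w - w v < alpha -> #|S v| = 0%N.
  move=> v hv; apply/eqP; rewrite eqn0Ngt; apply/negP => hp.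
  have := K v; have : alpha <= alpha * (#|S v|)%:R by rewrite ler_pMr // ler1n.
  lra.
have K1 : forall v, (#|S v| <= 1)%N.
  move=> v; case: (eqVneq v u1) => [->|hv1]; first by rewrite K0.
  case: (eqVneq v u2) => [->|hv2]; first by rewrite K0.
  rewrite leqNgt; apply/negP => hp.
  have := K v; have : alpha * 2%:R <= alpha * (#|S v|)%:R.
    by rewrite ler_pM2l // ler_nat.
  have := @sum3_le _ _ w u1 u2 v hw h12 ltac:(by rewrite eq_sym) ltac:(by rewrite eq_sym).
  have := hw v. lra.
have hc : connect (outcome S) u1 u2 by rewrite (eq_connect hSG); exact: hconn.
case/connectP: hc => p hp hl; move: hl.
case/shortenP: hp => p' hp' hu _ hl.
case: p' hp' hu hl => [|y q] /=; first by move=> _ _ e; rewrite e eqxx in h12.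
case/andP => hy hq hu hl.
have hS1 : S u1 = set0 by apply/eqP; rewrite -cards_eq0 K0.
move: hy; rewrite /outcome hS1 in_set0 orbF => hy.
have := path_buy K1 hy hq hu.
by rewrite -hl K0.
Qed.

Lemma wmax_le (R : realFieldType) n (w : 'I_n -> R) alpha :
  0 <= alpha -> (forall c, w c <= alpha) -> wmax w <= alpha.
Proof.
move=> ha hc; rewrite /wmax; apply: (big_ind (fun x => x <= alpha)) => //.
by move=> x y hx hy; rewrite ge_max hx hy.
Qed.

Theorem corollary2 (R : realFieldType) (n : nat) (w : 'I_n -> R) (alpha : R)
  (beta : nat) :
  (forall u, 0 < w u) -> 0 < alpha ->
  (1 <= beta)%N -> (beta <= n.-1)%N -> (1 < beta)%N ->
  (star_celebrity_game w alpha beta <->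
   (alpha < wmax w \/
    (wmax w <= alpha /\ (#|[set u : 'I_n | (totalW w - w u < alpha)%R]| <= 1)%N)))
  /\
  ((alpha < wmax w \/
    (wmax w <= alpha /\ (#|[set u : 'I_n | (totalW w - w u < alpha)%R]| <= 1)%N))
   <-> exists G : rel 'I_n, star_graph G /\ ne_graph w alpha beta G).
Proof.
move=> hw ha hb1 hbn hb.
set C2 := (alpha < wmax w \/ _).
have hA : C2 -> exists G : rel 'I_n, star_graph G /\ ne_graph w alpha beta G.
  case=> [hlt|[hle hcard]].
    have [c hc] : exists c, alpha < w c.
      case: (pickP (fun c => alpha < w c)) => [c hc|hn]; first by exists c.
      have hle : forall c, w c <= alpha by move=> c; rewrite leNgt hn.
      have := wmax_le (ltW ha) hle.
      by rewrite leNgt hlt.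
    apply: (star_ne (c := c)) => // v hv.
    have := sum2_le hw hv; lra.
  case: (set_0Vmem [set u : 'I_n | totalW w - w u < alpha]) => [e|[c hc]].
    have n0 : (0 < n)%N by lia.
    apply: (star_ne (c := Ordinal n0)) => // v _.
    have : v \notin [set u : 'I_n | totalW w - w u < alpha] by rewrite e in_set0.
    by rewrite inE -leNgt.
  apply: (star_ne (c := c)) => // v hv.
  rewrite leNgt; apply/negP => hv'.
  move: hcard; rewrite leqNgt => /negP; apply; apply/card_gt1P.
  by exists v, c; rewrite inE hv'.
have hB : (exists G : rel 'I_n, star_graph G /\ ne_graph w alpha beta G) ->
    star_celebrity_game w alpha beta.
  by case=> G [hs hn]; exists G; split => //; exact: star_conn.
have hC : star_celebrity_game w alpha beta -> C2.
  case=> G [hn hc].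
  case: (boolP (alpha < wmax w)) => h; [by left | right].
  rewrite -leNgt in h; split => //.
  rewrite leqNgt; apply/negP => /card_gt1P [u1 [u2 []]].
  rewrite !inE => h1 h2 h12.
  exact: (conn_cond hw ha hn hc h12 h1 h2).
split; split; auto.
Qed.
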